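(* For any $\lambda\in K^*$, the algebras $\Lambda(\mathbb S,\lambda)$ and $\operatorname{T}(B(\lambda))$ are isomorphic.
   Context: $K$ is an algebraically closed field. For an algebra $B$, the trivial extension $\operatorname{T}(B)=B\ltimes D(B)$ is $B\oplus D(B)$, $D(B)=\operatorname{Hom}_K(B,K)$, with multiplication $(b_1,f_1)(b_2,f_2)=(b_1b_2,b_1f_2+f_1b_2)$. $B(\lambda)$ is the algebra given by the quiver with vertices $1,\dots,6$ and arrows $\alpha:3\to1$, $\sigma:3\to2$, $\gamma:4\to1$, $\beta:4\to2$, $\xi:5\to3$, $\eta:5\to4$, $\mu:6\to3$, $\omega:6\to4$, and relations $\eta\gamma=\xi\alpha$, $\xi\sigma=\lambda\eta\beta$, $\mu\alpha=\omega\gamma$, $\omega\beta=\mu\sigma$ (paths composed left to right). $\Lambda(\mathbb S,\lambda)$ is the algebra given by the quiver with vertices $1,\dots,6$ and arrows $\alpha:3\to1$, $\beta:4\to2$, $\gamma:4\to1$, $\delta:1\to5$, $\varepsilon:2\to5$, $\eta:5\to4$, $\xi:5\to3$, $\varrho:2\to6$, $\sigma:3\to2$, $\mu:6\to3$, $\nu:1\to6$, $\omega:6\to4$, and relations $\delta\eta=\nu\omega$, $\eta\gamma=\xi\alpha$, $\gamma\delta=\lambda\beta\varepsilon$, $\varrho\omega=\lambda\varepsilon\eta$, $\omega\beta=\mu\sigma$, $\beta\varrho=\gamma\nu$, $\sigma\varepsilon=\alpha\delta$, $\varepsilon\xi=\varrho\mu$, $\xi\sigma=\lambda\eta\beta$,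 $\alpha\nu=\sigma\varrho$, $\nu\mu=\delta\xi$, $\mu\alpha=\omega\gamma$, and $\delta\eta\beta=\eta\gamma\nu=\gamma\delta\xi=\varrho\omega\gamma=\omega\beta\varepsilon=\beta\varrho\mu=\sigma\varepsilon\eta=\varepsilon\xi\alpha=\xi\sigma\varrho=\alpha\nu\omega=\nu\mu\sigma=\mu\alpha\delta=0$. (This is the tetrahedral algebra $\Lambda(\mathbb S,\lambda,1,1,1)$.) *)

(* Defs.v *)
From HB Require Import structures.
From mathcomp Require Import all_boot all_order all_algebra falgebra.
Set Implicit Arguments. Unset Strict Implicit. Unset Printing Implicit Defensive.
Import GRing.Theory.
Local Open Scope ring_scope.

Definition is_alg_hom (K : fieldType) (A C : algType K) (f : A -> C) : Prop :=
  [/\ forall (c : K) (x y : A), f (c *: x + y) = c *: f x + f y,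
      forall x y : A, f (x * y) = f x * f y
    & f 1 = 1].

(* Representations of the path algebra KQ of a quiver Q with vertex set *)
(* 'I_n and arrow type Ar (source s, target t) in a K-algebra C: a       *)
(* complete family of orthogonal idempotents e_i (one per vertex) and    *)
(* elements a_k (one per arrow) with a_k = e_(s k) a_k e_(t k).          *)
(* Paths are composed LEFT TO RIGHT: an arrow k : i -> j lies in         *)
(* e_i C e_j, and the product p q is the path "p then q".               *)
Definition quiver_rep (K : fieldType) (n : nat) (Ar : Type)
    (s t : Ar -> 'I_n) (C : algType K) (e : 'I_n -> C) (a : Ar -> C) : Prop :=
  [/\ forall i j : 'I_n, e i * e j = (if i == j then e i else 0),
      \sum_(i < n) e i = 1
    & forall k : Ar, a k = e (s k) * a k * e (t k)].

(* A is "the algebra given by the quiver Q (s,t) and the relations Rel",  *)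
(* i.e. the K-algebra presented by these generators and relations         *)
(* (KQ modulo the ideal generated by the relations), characterised by    *)
(* its universal property: (A, e, a) satisfies the relations, and for    *)
(* every K-algebra C with such data there is exactly one unital algebra  *)
(* homomorphism A -> C sending generators to generators.                 *)
Definition presented_by (K : fieldType) (n : nat) (Ar : Type)
    (s t : Ar -> 'I_n)
    (Rel : forall C : algType K, ('I_n -> C) -> (Ar -> C) -> Prop)
    (A : algType K) (e : 'I_n -> A) (a : Ar -> A) : Prop :=
  [/\ quiver_rep s t e a, Rel A e a
    & forall (C : algType K) (e' : 'I_n -> C) (a' : Ar -> C),
        quiver_rep s t e' a' -> Rel C e' a' ->
        (exists f : A -> C, [/\ is_alg_hom f, f \o e =1 e' & f \o a =1 a'])
        /\ (forall f g : A -> C,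
              is_alg_hom f -> f \o e =1 e' -> f \o a =1 a' ->
              is_alg_hom g -> g \o e =1 e' -> g \o a =1 a' -> f =1 g)].

Definition vtx (k : nat) : 'I_6 := inord k.-1.

Inductive BArr := Ba_alpha | Ba_sigma | Ba_gamma | Ba_beta
                | Ba_xi | Ba_eta | Ba_mu | Ba_omega.

Definition B_src (x : BArr) : 'I_6 :=
  match x with
  | Ba_alpha => vtx 3 | Ba_sigma => vtx 3 | Ba_gamma => vtx 4 | Ba_beta => vtx 4
  | Ba_xi => vtx 5 | Ba_eta => vtx 5 | Ba_mu => vtx 6 | Ba_omega => vtx 6
  end.
Definition B_tgt (x : BArr) : 'I_6 :=
  match x with
  | Ba_alpha => vtx 1 | Ba_sigma => vtx 2 | Ba_gamma => vtx 1 | Ba_beta => vtx 2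
  | Ba_xi => vtx 3 | Ba_eta => vtx 4 | Ba_mu => vtx 3 | Ba_omega => vtx 4
  end.

Definition B_rel (K : fieldType) (lam : K) (C : algType K)
    (e : 'I_6 -> C) (a : BArr -> C) : Prop :=
  let alpha := a Ba_alpha in let sigma := a Ba_sigma in
  let gamma := a Ba_gamma in let beta := a Ba_beta in
  let xi := a Ba_xi in let eta := a Ba_eta in
  let mu := a Ba_mu in let omega := a Ba_omega in
  [/\ eta * gamma = xi * alpha,
      xi * sigma = lam *: (eta * beta),
      mu * alpha = omega * gamma
    & omega * beta = mu * sigma].

(* The tetrahedral algebra Lambda(S, lambda) = Lambda(S, lambda, 1,1,1). *)
Inductive LArr := La_alpha | La_beta | La_gamma | La_delta | La_eps | La_eta
                | La_xi | La_rho | La_sigma | La_mu | La_nu | La_omega.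

Definition L_src (x : LArr) : 'I_6 :=
  match x with
  | La_alpha => vtx 3 | La_beta => vtx 4 | La_gamma => vtx 4 | La_delta => vtx 1
  | La_eps => vtx 2 | La_eta => vtx 5 | La_xi => vtx 5 | La_rho => vtx 2
  | La_sigma => vtx 3 | La_mu => vtx 6 | La_nu => vtx 1 | La_omega => vtx 6
  end.
Definition L_tgt (x : LArr) : 'I_6 :=
  match x with
  | La_alpha => vtx 1 | La_beta => vtx 2 | La_gamma => vtx 1 | La_delta => vtx 5
  | La_eps => vtx 5 | La_eta => vtx 4 | La_xi => vtx 3 | La_rho => vtx 6
  | La_sigma => vtx 2 | La_mu => vtx 3 | La_nu => vtx 6 | La_omega => vtx 4
  end.

Definition L_rel (K : fieldType) (lam : K) (C : algType K)
    (e : 'I_6 -> C) (a : LArr -> C) : Prop :=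
  let alpha := a La_alpha in let beta := a La_beta in
  let gamma := a La_gamma in let delta := a La_delta in
  let eps := a La_eps in let eta := a La_eta in
  let xi := a La_xi in let rho := a La_rho in
  let sigma := a La_sigma in let mu := a La_mu in
  let nu := a La_nu in let omega := a La_omega in
  [/\ [/\ delta * eta = nu * omega,
          eta * gamma = xi * alpha,
          gamma * delta = lam *: (beta * eps),
          rho * omega = lam *: (eps * eta)
        & omega * beta = mu * sigma],
      [/\ beta * rho = gamma * nu,
          sigma * eps = alpha * delta,
          eps * xi = rho * mu,
          xi * sigma = lam *: (eta * beta)
        & alpha * nu = sigma * rho],
      [/\ nu * mu = delta * xi
        & mu * alpha = omega * gamma],
      [/\ delta * eta * beta = 0,
          eta * gamma * nu = 0,
          gamma * delta * xi = 0,
          rho * omega * gamma = 0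
        & omega * beta * eps = 0]
    & [/\ [/\ beta * rho * mu = 0,
              sigma * eps * eta = 0,
              eps * xi * alpha = 0
            & xi * sigma * rho = 0],
          alpha * nu * omega = 0,
          nu * mu * sigma = 0
        & mu * alpha * delta = 0]].

(* Trivial extension T(B) = B |x D(B), D(B) = Hom_K(B, K), on the      *)
(* K-space B * D(B), with the standard B-bimodule structure of D(B):  *)
(* (b . f)(x) = f(x b),  (f . b)(x) = f(b x).                           *)
Definition dual_lact (K : fieldType) (B : falgType K) (b : B)
    (f : 'Hom(B, K^o)) : 'Hom(B, K^o) := linfun (fun x : B => f (x * b)).
Definition dual_ract (K : fieldType) (B : falgType K) (f : 'Hom(B, K^o))
    (b : B) : 'Hom(B, K^o) := linfun (fun x : B => f (b * x)).

Definition triv_ext_mul (K : fieldType) (B : falgType K)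
    (u v : B * 'Hom(B, K^o)) : B * 'Hom(B, K^o) :=
  (u.1 * v.1, dual_lact u.1 v.2 + dual_ract u.2 v.1).

Definition iso_triv_ext (K : fieldType) (A : algType K) (B : falgType K)
    (phi : A -> B * 'Hom(B, K^o)) : Prop :=
  [/\ bijective phi,
      forall (c : K) (x y : A), phi (c *: x + y) = c *: phi x + phi y,
      forall x y : A, phi (x * y) = triv_ext_mul (phi x) (phi y)
    & phi 1 = (1, 0)].

(* Main.v *)
Require Import Defs.
From HB Require Import structures.
From mathcomp Require Import all_boot all_order all_algebra falgebra.
From mathcomp Require Import ring.
From Stdlib Require Import ClassicalEpsilon.
Set Implicit Arguments. Unset Strict Implicit. Unset Printing Implicit Defensive.
Import GRing.Theory.
Local Open Scope ring_scope.

Notation o k := (@Ordinal 6 k isT).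
Ltac ocase v := let m := fresh "m" in let pm := fresh "pm" in
  case: v => m pm; do 36?[destruct m as [|m]; [ have -> : pm = isT by apply: eq_irrelevance | ]]; try by [].
Lemma oeq (i j : nat) (pi : (i < 6)%N) (pj : (j < 6)%N) : (Ordinal pi == Ordinal pj) = (i == j).
Proof. by []. Qed.
Lemma vtx1 : vtx 1 = o 0. Proof. by apply/val_inj; rewrite /= inordK. Qed.
Lemma vtx2 : vtx 2 = o 1. Proof. by apply/val_inj; rewrite /= inordK. Qed.
Lemma vtx3 : vtx 3 = o 2. Proof. by apply/val_inj; rewrite /= inordK. Qed.
Lemma vtx4 : vtx 4 = o 3. Proof. by apply/val_inj; rewrite /= inordK. Qed.
Lemma vtx5 : vtx 5 = o 4. Proof. by apply/val_inj; rewrite /= inordK. Qed.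
Lemma vtx6 : vtx 6 = o 5. Proof. by apply/val_inj; rewrite /= inordK. Qed.
Definition vtxE := (vtx1, vtx2, vtx3, vtx4, vtx5, vtx6).

Section Quiv.
Variables (K : fieldType) (n : nat) (Ar : Type) (s t : Ar -> 'I_n) (C : algType K)
  (e : 'I_n -> C) (a : Ar -> C).
Hypothesis hq : quiver_rep s t e a.
Lemma q_ee i j : e i * e j = if i == j then e i else 0.
Proof. by case: hq. Qed.
Lemma q_xee x i j : x * e i * e j = if i == j then x * e i else 0.
Proof. by rewrite -mulrA q_ee; case: eqP; rewrite ?mulr0. Qed.
Lemma q_a k : a k = e (s k) * a k * e (t k).
Proof. by case: hq. Qed.
Lemma q_ea i k : e i * a k = if i == s k then a k else 0.
Proof. by rewrite q_a !mulrA q_ee; case: eqP => [->|]; rewrite -?q_a ?mul0r. Qed.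
Lemma q_xea x i k : x * e i * a k = if i == s k then x * a k else 0.
Proof. by rewrite -mulrA q_ea; case: eqP; rewrite ?mulr0. Qed.
Lemma q_ae k j : a k * e j = if t k == j then a k else 0.
Proof. by rewrite q_a -!mulrA q_ee; case: eqP => [->|]; rewrite ?mulrA -?q_a ?mulr0. Qed.
Lemma q_xae x k j : x * a k * e j = if t k == j then x * a k else 0.
Proof. by rewrite -mulrA q_ae; case: eqP; rewrite ?mulr0. Qed.
Lemma q_aa0 k l : t k != s l -> a k * a l = 0.
Proof. by move=> h; rewrite (q_a l) !mulrA (q_ae k (s l)) (negbTE h) !mul0r. Qed.
Lemma q_xaa0 x k l : t k != s l -> x * a k * a l = 0.
Proof. by move=> h; rewrite -mulrA q_aa0 ?mulr0. Qed.
End Quiv.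

Definition pb (P : Prop) : bool := if excluded_middle_informative P then true else false.
Lemma pbP (P : Prop) : reflect P (pb P).
Proof. by rewrite /pb; case: excluded_middle_informative => h; constructor. Qed.

Section Span.
Variables (K : fieldType) (n : nat) (Ar : Type) (s t : Ar -> 'I_n)
  (Rel : forall C : algType K, ('I_n -> C) -> (Ar -> C) -> Prop)
  (A : algType K) (e : 'I_n -> A) (a : Ar -> A) (N : nat) (P : 'I_N -> A).

Definition inspan (x : A) := exists c : 'I_N -> K, x = \sum_i c i *: P i.

Lemma inspan0 : inspan 0.
Proof. by exists (fun _ => 0); rewrite big1 // => i _; rewrite scale0r. Qed.
Lemma inspanZD k x y : inspan x -> inspan y -> inspan (k *: x + y).
Proof.
move=> [c ->] [d ->]; exists (fun i => k * c i + d i).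
by rewrite scaler_sumr -big_split /=; apply: eq_bigr => i _; rewrite scalerDl scalerA.
Qed.
Lemma inspanP k j : inspan (k *: P j).
Proof.
exists (fun i => if i == j then k else 0); rewrite (bigD1 j) //= eqxx big1 ?addr0 //.
by move=> i /negbTE ->; rewrite scale0r.
Qed.
Lemma inspanP1 j : inspan (P j).
Proof. by rewrite -[P j]scale1r; apply: inspanP. Qed.

Definition Mpred : {pred A} := fun x => pb (forall y, inspan y -> inspan (x * y)).

Lemma Msubalg : subalg_closed Mpred.
Proof.
split.
- by apply/pbP => y; rewrite mul1r.
- move=> k u v /pbP hu /pbP hv; apply/pbP => y hy.
  by rewrite mulrDl -scalerAl; apply: inspanZD; [apply: hu | apply: hv].
- move=> u v /pbP hu /pbP hv; apply/pbP => y hy.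
  by rewrite -mulrA; apply: hu; apply: hv.
Qed.
HB.instance Definition _ := GRing.isSubalgClosed.Build K A Mpred (GRing.subalg_closed_semi Msubalg).
Record Msub := MSub { msval :> A; _ : msval \in Mpred }.
HB.instance Definition _ := [isSub for msval].
HB.instance Definition _ := [Choice of Msub by <:].
HB.instance Definition _ := [SubChoice_isSubAlgebra of Msub by <:].

Lemma Msub_alg : is_alg_hom (msval : Msub -> A).
Proof. by split => //= *; rewrite ?linearP ?rmorphM. Qed.


Lemma inspan_sum (I : finType) (F : I -> A) : (forall i, inspan (F i)) -> inspan (\sum_i F i).
Proof.
move=> h; elim/big_ind: _ => //; first exact: inspan0.
by move=> x y hx hy; rewrite -[x]scale1r; apply: inspanZD.
Qed.

Lemma inM x : (forall j, inspan (x * P j)) -> x \in Mpred.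
Proof.
move=> h; apply/pbP => y [c ->]; rewrite mulr_sumr; apply: inspan_sum => i.
by rewrite -scalerAr -[_ *: _]addr0; apply: inspanZD => //; apply: inspan0.
Qed.

End Span.

Lemma hom_comp (K : fieldType) (A B C : algType K) (f : A -> B) (g : B -> C) :
  is_alg_hom f -> is_alg_hom g -> is_alg_hom (g \o f).
Proof.
move=> [f1 f2 f3] [g1 g2 g3]; split => /=.
- by move=> c x y; rewrite f1 g1.
- by move=> x y; rewrite f2 g2.
- by rewrite f3 g3.
Qed.
Lemma hom_id (K : fieldType) (A : algType K) : is_alg_hom (@id A).
Proof. by []. Qed.

Lemma span_all (K : fieldType) (n : nat) (Ar : Type) (s t : Ar -> 'I_n)
  (Rel : forall C : algType K, ('I_n -> C) -> (Ar -> C) -> Prop)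
  (A : algType K) (e : 'I_n -> A) (a : Ar -> A) (N : nat) (P : 'I_N -> A) :
  presented_by s t Rel e a ->
  (forall (C : algType K) (f : C -> A) e' a', is_alg_hom f -> injective f ->
     (forall i, f (e' i) = e i) -> (forall k, f (a' k) = a k) -> Rel A e a -> Rel C e' a') ->
  forall span1 : inspan P 1,
  (forall v j, inspan P (e v * P j)) -> (forall k j, inspan P (a k * P j)) ->
  forall x, inspan P x.
Proof.
move=> [qr rel UP] refl span1 he ha x.
pose e' v : Msub P := MSub (inM (he v)).
pose a' k : Msub P := MSub (inM (ha k)).
have hv : is_alg_hom (@msval _ _ _ P) by apply: Msub_alg.
have vinj : injective (@msval _ _ _ P) by apply: val_inj.
have qr' : quiver_rep s t e' a'.
  case: qr => q1 q2 q3; split.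
  - move=> i j; apply: val_inj; rewrite rmorphM /= q1; case: eqP => _ //=.
  - apply: vinj; change (val (\sum_i e' i) = val (1 : Msub P)). by rewrite rmorph_sum rmorph1 /= -q2.
  - by move=> k; apply: val_inj; rewrite !rmorphM /= -q3.
have rel' : Rel _ e' a' by apply: (refl _ (@msval _ _ _ P)) => //.
have [[f [fh fe fa]] _] := UP _ e' a' qr' rel'.
have [_ uniq] := UP _ e a qr rel.
have H : forall y, @msval _ _ _ P (f y) = y.
  move=> y; apply: (uniq (@msval _ _ _ P \o f) id (hom_comp fh hv)) => //.
  - by move=> v /=; have /= -> := fe v.
  - by move=> k /=; have /= -> := fa k.
have : @msval _ _ _ P (f x) \in Mpred P by case: (f x).
by rewrite H => /pbP /(_ 1 span1); rewrite mulr1.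
Qed.



Section TE.
Variables (K : fieldType) (B : falgType K).

Lemma linfunE' (f : B -> K^o) : linear f -> forall x, linfun f x = f x.
Proof.
move=> lf x.
pose F : {linear B -> K^o} := HB.pack f (GRing.isLinear.Build K B K^o *:%R f lf).
exact: (lfunE F).
Qed.

Lemma dual_lactE b (f : 'Hom(B, K^o)) x : dual_lact b f x = f (x * b).
Proof. by rewrite linfunE' // => c u v; rewrite mulrDl -scalerAl linearP. Qed.
Lemma dual_ractE b (f : 'Hom(B, K^o)) x : dual_ract f b x = f (b * x).
Proof. by rewrite linfunE' // => c u v; rewrite mulrDr -scalerAr linearP. Qed.

Ltac dsimp := repeat match goal with
  | |- context [fun_of_lfun (dual_lact ?b ?f) ?x] => rewrite (dual_lactE b f x)
  | |- context [fun_of_lfun (dual_ract ?f ?b) ?x] => rewrite (dual_ractE b f x)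
  | |- context [fun_of_lfun (?f + ?g) ?x] => rewrite (add_lfunE f g x)
  | |- context [fun_of_lfun (?k *: ?f) ?x] => rewrite (scale_lfunE k f x)
  | |- context [fun_of_lfun 0 ?x] => rewrite zero_lfunE
  end.

Definition TE := (B * 'Hom(B, K^o))%type.
HB.instance Definition _ := GRing.Lmodule.on TE.
Definition te_one : TE := (1, 0).
Definition te_mul (u v : TE) : TE := triv_ext_mul u v.

Ltac tsolve := case=> [? ?]; try case=> [? ?]; try case=> [? ?]; rewrite /te_mul /triv_ext_mul /=;
  congr pair; try apply/lfunP => x; rewrite ?add_lfunE ?dual_lactE ?dual_ractE ?zero_lfunE ?add_lfunE ?dual_lactE ?dual_ractE.

Lemma te_mulA : associative te_mul.
Proof.
move=> [a f] [b g] [c h]; rewrite /te_mul /triv_ext_mul /=; congr pair; first by rewrite mulrA.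
apply/lfunP => x; dsimp.
by rewrite !mulrA addrA.
Qed.
Lemma te_mul1 : left_id te_one te_mul.
Proof.
move=> [a f]; rewrite /te_mul /triv_ext_mul /=; congr pair; first by rewrite mul1r.
by apply/lfunP => x; rewrite !add_lfunE (dual_lactE 1 f x) (dual_ractE a 0 x) zero_lfunE mulr1 addr0.
Qed.
Lemma te_mulr1 : right_id te_one te_mul.
Proof.
move=> [a f]; rewrite /te_mul /triv_ext_mul /=; congr pair; first by rewrite mulr1.
by apply/lfunP => x; rewrite !add_lfunE (dual_lactE a 0 x) (dual_ractE 1 f x) zero_lfunE mul1r add0r.
Qed.
Lemma te_mulDl : left_distributive te_mul +%R.
Proof.
move=> [a f] [b g] [c h]; rewrite /te_mul /triv_ext_mul /=; congr pair; first by rewrite mulrDl.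
apply/lfunP => x /=; dsimp.
by rewrite mulrDr linearD /= addrACA.
Qed.
Lemma te_mulDr : right_distributive te_mul +%R.
Proof.
move=> [a f] [b g] [c h]; rewrite /te_mul /triv_ext_mul /=; congr pair; first by rewrite mulrDr.
apply/lfunP => x /=; dsimp.
by rewrite mulrDl linearD /= addrACA.
Qed.
Lemma te_one_neq0 : te_one != 0.
Proof. by apply/eqP => -[]; apply/eqP; exact: oner_neq0. Qed.

HB.instance Definition _ := GRing.Zmodule_isNzRing.Build TE te_mulA te_mul1 te_mulr1 te_mulDl te_mulDr te_one_neq0.

Lemma te_scaleAl (k : K) (u v : TE) : k *: (u * v) = (k *: u) * v.
Proof.
case: u v => [a f] [b g]; rewrite /GRing.mul /= /te_mul /triv_ext_mul /=; congr pair; first by rewrite scalerAl.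
apply/lfunP => x /=; dsimp.
by rewrite -scalerAr linearZ /= scalerDr.
Qed.
HB.instance Definition _ := GRing.Lmodule_isLalgebra.Build K TE te_scaleAl.
Lemma te_scaleAr (k : K) (u v : TE) : k *: (u * v) = u * (k *: v).
Proof.
case: u v => [a f] [b g]; rewrite /GRing.mul /= /te_mul /triv_ext_mul /=; congr pair; first by rewrite scalerAr.
apply/lfunP => x /=; dsimp.
by rewrite -scalerAl linearZ /= scalerDr.
Qed.
HB.instance Definition _ := GRing.Lalgebra_isAlgebra.Build K TE te_scaleAr.
End TE.

Ltac dsimp := repeat match goal with
  | |- context [fun_of_lfun (dual_lact ?b ?f) ?x] => rewrite (@dual_lactE _ _ b f x)
  | |- context [fun_of_lfun (dual_ract ?f ?b) ?x] => rewrite (@dual_ractE _ _ b f x)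
  | |- context [fun_of_lfun (?f + ?g) ?x] => rewrite (add_lfunE f g x)
  | |- context [fun_of_lfun (?k *: ?f) ?x] => rewrite (scale_lfunE k f x)
  | |- context [fun_of_lfun 0 ?x] => rewrite zero_lfunE
  end.

Definition Bs (k : BArr) : 'I_6 :=
  match k with
  | Ba_alpha => o 2 | Ba_sigma => o 2 | Ba_gamma => o 3 | Ba_beta => o 3
  | Ba_xi => o 4 | Ba_eta => o 4 | Ba_mu => o 5 | Ba_omega => o 5
  end.
Definition Bt (k : BArr) : 'I_6 :=
  match k with
  | Ba_alpha => o 0 | Ba_sigma => o 1 | Ba_gamma => o 0 | Ba_beta => o 1
  | Ba_xi => o 2 | Ba_eta => o 3 | Ba_mu => o 2 | Ba_omega => o 3
  end.
Lemma BsE : B_src =1 Bs. Proof. by case; rewrite /= vtxE. Qed.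
Lemma BtE : B_tgt =1 Bt. Proof. by case; rewrite /= vtxE. Qed.

Section BPart.
Variables (K : fieldType) (lam : K) (B : falgType K) (eB : 'I_6 -> B) (aB : BArr -> B).
Hypotheses (hq0 : quiver_rep B_src B_tgt eB aB) (hr : B_rel lam eB aB).
Lemma hq : quiver_rep Bs Bt eB aB.
Proof. by case: hq0 => h1 h2 h3; split => // k; rewrite -BsE -BtE. Qed.

Definition XB (i : 'I_18) : B := nth 0 [:: eB (o 0); eB (o 1); eB (o 2); eB (o 3); eB (o 4); eB (o 5);
  aB Ba_alpha; aB Ba_sigma; aB Ba_gamma; aB Ba_beta; aB Ba_xi; aB Ba_eta; aB Ba_mu; aB Ba_omega;
  aB Ba_eta * aB Ba_gamma; aB Ba_eta * aB Ba_beta; aB Ba_mu * aB Ba_alpha; aB Ba_mu * aB Ba_sigma] i.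

Lemma rB1 : aB Ba_xi * aB Ba_alpha = aB Ba_eta * aB Ba_gamma. Proof. by case: hr. Qed.
Lemma rB2 : aB Ba_xi * aB Ba_sigma = lam *: (aB Ba_eta * aB Ba_beta). Proof. by case: hr. Qed.
Lemma rB3 : aB Ba_omega * aB Ba_gamma = aB Ba_mu * aB Ba_alpha. Proof. by case: hr. Qed.
Lemma rB4 : aB Ba_omega * aB Ba_beta = aB Ba_mu * aB Ba_sigma. Proof. by case: hr. Qed.

Ltac qs := rewrite ?(q_ee hq) ?(q_xee hq) ?(q_ea hq) ?(q_xea hq) ?(q_ae hq) ?(q_xae hq) /= ?oeq /=.
Ltac kill := repeat match goal with
  | |- context [?x * aB ?k * aB ?l] => rewrite (q_xaa0 hq x (k:=k) (l:=l)); [|by []]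
  | |- context [aB ?k * aB ?l] => rewrite (q_aa0 hq (k:=k) (l:=l)); [|by []]
  end.
Ltac bsimp := rewrite ?mulrA; do 3 qs; kill; rewrite ?mul0r ?mulr0 ?rB1 ?rB2 ?rB3 ?rB4.

Ltac pickB tac := first [ tac (Ordinal (isT : (0 < 18)%N)) | tac (Ordinal (isT : (1 < 18)%N)) | tac (Ordinal (isT : (2 < 18)%N))
 | tac (Ordinal (isT : (3 < 18)%N)) | tac (Ordinal (isT : (4 < 18)%N)) | tac (Ordinal (isT : (5 < 18)%N)) | tac (Ordinal (isT : (6 < 18)%N))
 | tac (Ordinal (isT : (7 < 18)%N)) | tac (Ordinal (isT : (8 < 18)%N)) | tac (Ordinal (isT : (9 < 18)%N)) | tac (Ordinal (isT : (10 < 18)%N))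
 | tac (Ordinal (isT : (11 < 18)%N)) | tac (Ordinal (isT : (12 < 18)%N)) | tac (Ordinal (isT : (13 < 18)%N)) | tac (Ordinal (isT : (14 < 18)%N))
 | tac (Ordinal (isT : (15 < 18)%N)) | tac (Ordinal (isT : (16 < 18)%N)) | tac (Ordinal (isT : (17 < 18)%N)) ].
Ltac spanB := first [ exact: inspan0 | pickB ltac:(fun j => exact (inspanP1 XB j)) | pickB ltac:(fun j => exact (inspanP XB _ j)) ].

Lemma XB_e v j : inspan XB (eB v * XB j).
Proof.
ocase v; ocase j; rewrite /XB /=; bsimp; try spanB.
Qed.
Lemma XB_a k j : inspan XB (aB k * XB j).
Proof. case: k; ocase j; rewrite /XB /=; bsimp; spanB. Qed.
Lemma XB_1 : inspan XB 1.
Proof.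
case: hq => _ <- _; apply: inspan_sum => v; ocase v; spanB.
Qed.
Lemma B_refl (C : algType K) (f : C -> B) (e' : 'I_6 -> C) (a' : BArr -> C) :
  is_alg_hom f -> injective f -> (forall i, f (e' i) = eB i) -> (forall k, f (a' k) = aB k) ->
  B_rel lam eB aB -> B_rel lam e' a'.
Proof.
move=> [f1 f2 f3] fi fe fa [r1 r2 r3 r4].
have f0 : f 0 = 0 by have := f1 1 0 0; rewrite !scale1r addr0 => h; apply: (addrI (f 0)); rewrite addr0 -h.
have fZ c x : f (c *: x) = c *: f x by have := f1 c x 0; rewrite !addr0 f0 addr0.
by split; apply: fi; rewrite ?fZ !f2 !fa.
Qed.
Hypothesis hP : presented_by B_src B_tgt (B_rel lam) eB aB.
Lemma B_span x : inspan XB x.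
Proof.
apply: (span_all hP) => //; [exact: B_refl | exact: XB_1 | exact: XB_e | exact: XB_a].
Qed.


Definition sd (c : K) (i j : 'I_6) : 'M[K]_6 := c *: delta_mx i j.
Lemma sd_mul c d i j k l : sd c i j * sd d k l = if j == k then sd (c * d) i l else 0.
Proof.
rewrite /sd /GRing.mul /= -scalemxAl -scalemxAr scalerA mul_delta_mx_cond.
by case: eqP => _; rewrite ?mulr1n ?mulr0n ?scaler0.
Qed.
Lemma sd_entry c i j r s : sd c i j r s = if (i == r) && (j == s) then c else 0.
Proof. by rewrite /sd !mxE (eq_sym r) (eq_sym s); case: ifP => _; rewrite /= ?mulr1 ?mulr0. Qed.
Lemma mx0_entry (r s : 'I_6) : (0 : 'M[K]_6) r s = 0. Proof. by rewrite mxE. Qed.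

Definition ment (rho : B -> 'M[K]_6) (i j : 'I_6) : 'Hom(B, K^o) := linfun (fun x => (rho x i j : K^o)).
Lemma mentE rho i j x : is_alg_hom rho -> ment rho i j x = rho x i j.
Proof.
move=> [h1 _ _]; rewrite linfunE' // => c u v.
by rewrite h1 !mxE.
Qed.
Lemma scaleoE (k x : K) : (k *: (x : K^o)) = k * x :> K. Proof. by []. Qed.

Variables (rho1 rho2 : B -> 'M[K]_6).
Definition c1 (k : BArr) : K := match k with Ba_sigma => lam | Ba_mu => 0 | Ba_omega => 0 | _ => 1 end.
Definition c2 (k : BArr) : K := match k with Ba_xi => 0 | Ba_eta => 0 | _ => 1 end.
Hypotheses (rh1 : is_alg_hom rho1) (rh2 : is_alg_hom rho2)
  (r1e : forall i, rho1 (eB i) = sd 1 i i) (r2e : forall i, rho2 (eB i) = sd 1 i i)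
  (r1a : forall k, rho1 (aB k) = sd (c1 k) (Bs k) (Bt k))
  (r2a : forall k, rho2 (aB k) = sd (c2 k) (Bs k) (Bt k)).
Lemma rho1M x y : rho1 (x * y) = rho1 x * rho1 y. Proof. by case: rh1. Qed.
Lemma rho2M x y : rho2 (x * y) = rho2 x * rho2 y. Proof. by case: rh2. Qed.

Lemma hom_ext (f g : 'Hom(B, K^o)) : (forall q, f (XB q) = g (XB q)) -> f = g.
Proof.
move=> h; apply/lfunP => x; have [c ->] := B_span x.
by rewrite !linear_sum; apply: eq_bigr => i _; rewrite !linearZ /= h.
Qed.
Lemma te_ext (u v : TE B) : u.1 = v.1 -> (forall q, u.2 (XB q) = v.2 (XB q)) -> u = v.
Proof. by case: u v => [a f] [b g] /= -> /hom_ext ->. Qed.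
Lemma te_oneE : (1 : TE B) = (1, 0). Proof. by []. Qed.
Lemma te_addE (u v : TE B) : u + v = (u.1 + v.1, u.2 + v.2). Proof. by []. Qed.
Lemma te_mulE (u v : TE B) : u * v = (u.1 * v.1, dual_lact u.1 v.2 + dual_ract u.2 v.1).
Proof. by []. Qed.

Definition eT (i : 'I_6) : TE B := (eB i, 0).
Definition aT (k : LArr) : TE B :=
  match k with
  | La_alpha => (aB Ba_alpha, 0) | La_beta => (aB Ba_beta, 0) | La_gamma => (aB Ba_gamma, 0)
  | La_sigma => (aB Ba_sigma, 0) | La_xi => (aB Ba_xi, 0) | La_eta => (aB Ba_eta, 0)
  | La_mu => (aB Ba_mu, 0) | La_omega => (aB Ba_omega, 0)
  | La_delta => (0, lam *: ment rho1 (o 4) (o 0))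
  | La_eps => (0, ment rho1 (o 4) (o 1))
  | La_nu => (0, lam *: ment rho2 (o 5) (o 0))
  | La_rho => (0, lam *: ment rho2 (o 5) (o 1))
  end.

Lemma entL c i j (M : 'M[K]_6) r s : (sd c i j * M) r s = if i == r then c * M j s else 0.
Proof.
rewrite [LHS]mxE; under eq_bigr do rewrite sd_entry.
case: (i == r) => /=; last by rewrite big1 // => m _; rewrite mul0r.
rewrite (bigD1 j) //= eqxx big1 ?addr0 // => m /negbTE; rewrite eq_sym => ->; by rewrite mul0r.
Qed.
Lemma entR c i j (M : 'M[K]_6) r s : (M * sd c i j) r s = if j == s then c * M r i else 0.
Proof.
rewrite [LHS]mxE; under eq_bigr do rewrite sd_entry andbC.
case: (j == s) => /=; last by rewrite big1 // => m _; rewrite mulr0.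
rewrite (bigD1 i) //= eqxx big1 ?addr0 1?mulrC // => m /negbTE; rewrite eq_sym => ->; by rewrite mulr0.
Qed.

Ltac rsimp := rewrite ?rho1M ?rho2M ?r1e ?r2e ?r1a ?r2a /=;
  rewrite ?mulrA; do 4 (rewrite ?sd_mul /= ?oeq /= ?mul0r ?mulr0);
  rewrite ?sd_entry ?mx0_entry /= ?oeq /=.

Lemma cross (i j : 'I_6) (c : K) : (forall q, rho1 (XB q) i j = c * rho2 (XB q) i j) ->
  forall x, rho1 x i j = c * rho2 x i j.
Proof.
move=> h x; have [d ->] := B_span x.
rewrite -(mentE _ _ _ rh1) -(mentE _ _ _ rh2) !linear_sum mulr_sumr; apply: eq_bigr => q _.
by rewrite !linearZ /= !scaleoE !(mentE _ _ _ rh1) !(mentE _ _ _ rh2) h mulrCA.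
Qed.
Lemma X30 x : rho1 x (o 3) (o 0) = 1 * rho2 x (o 3) (o 0).
Proof. by apply: cross => q; ocase q; rewrite /XB /=; rsimp; ring. Qed.
Lemma X31 x : rho1 x (o 3) (o 1) = 1 * rho2 x (o 3) (o 1).
Proof. by apply: cross => q; ocase q; rewrite /XB /=; rsimp; ring. Qed.
Lemma X20 x : rho1 x (o 2) (o 0) = 1 * rho2 x (o 2) (o 0).
Proof. by apply: cross => q; ocase q; rewrite /XB /=; rsimp; ring. Qed.
Lemma X21 x : rho1 x (o 2) (o 1) = lam * rho2 x (o 2) (o 1).
Proof. by apply: cross => q; ocase q; rewrite /XB /=; rsimp; ring. Qed.

Lemma zent (rho : B -> 'M[K]_6) (rh : is_alg_hom rho) i j :
  (forall q, rho (XB q) i j = 0) -> forall x, rho x i j = 0.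
Proof.
move=> h x; have [d ->] := B_span x.
rewrite -(mentE _ _ _ rh) linear_sum big1 // => q _.
by rewrite linearZ /= scaleoE (mentE _ _ _ rh) h mulr0.
Qed.
Lemma Z1_23 x : rho1 x (o 2) (o 3) = 0.
Proof. by apply: (zent rh1) => q; ocase q; rewrite /XB /=; rsimp. Qed.
Lemma Z2_23 x : rho2 x (o 2) (o 3) = 0.
Proof. by apply: (zent rh2) => q; ocase q; rewrite /XB /=; rsimp. Qed.
Lemma Z1_32 x : rho1 x (o 3) (o 2) = 0.
Proof. by apply: (zent rh1) => q; ocase q; rewrite /XB /=; rsimp. Qed.
Lemma Z2_32 x : rho2 x (o 3) (o 2) = 0.
Proof. by apply: (zent rh2) => q; ocase q; rewrite /XB /=; rsimp. Qed.
Lemma Z1_01 x : rho1 x (o 0) (o 1) = 0.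
Proof. by apply: (zent rh1) => q; ocase q; rewrite /XB /=; rsimp. Qed.
Lemma Z2_01 x : rho2 x (o 0) (o 1) = 0.
Proof. by apply: (zent rh2) => q; ocase q; rewrite /XB /=; rsimp. Qed.
Lemma Z1_10 x : rho1 x (o 1) (o 0) = 0.
Proof. by apply: (zent rh1) => q; ocase q; rewrite /XB /=; rsimp. Qed.
Lemma Z2_10 x : rho2 x (o 1) (o 0) = 0.
Proof. by apply: (zent rh2) => q; ocase q; rewrite /XB /=; rsimp. Qed.

Lemma te_ext2 (u v : TE B) : u.1 = v.1 -> (forall x, u.2 x = v.2 x) -> u = v.
Proof. by case: u v => [a f] [b g] /= -> /lfunP ->. Qed.
Ltac xsimp := rewrite ?rho1M ?rho2M ?r1e ?r2e ?r1a ?r2a /=;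
  rewrite ?mulrA ?mul0r ?mulr0 ?mul0r; do 6 (rewrite ?sd_mul ?entR ?entL /= ?oeq /= ?mul0r ?mulr0);
  rewrite ?mx0_entry ?X30 ?X31 ?X20 ?X21 ?Z1_23 ?Z2_23 ?Z1_32 ?Z2_32 ?Z1_01 ?Z2_01 ?Z1_10 ?Z2_10.
Ltac tev := apply: te_ext2; [ rewrite ?te_mulE /= ?mul0r ?mulr0 ?mul0r ?mulr0 ?add0r ?addr0 ?scaler0; try by []; try by rewrite ?rB1 ?rB2 ?rB3 ?rB4
  | let x := fresh "x" in intro x; rewrite ?te_mulE /=; dsimp;
    rewrite ?mul0r ?mulr0 ?mul0r ?(mentE _ _ _ rh1) ?(mentE _ _ _ rh2) ?scaleoE; xsimp; try ring ].

Lemma dlact0 (b : B) : dual_lact b (0 : 'Hom(B, K^o)) = 0.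
Proof. by apply/lfunP => x; dsimp. Qed.
Lemma dract0 (b : B) : dual_ract (0 : 'Hom(B, K^o)) b = 0.
Proof. by apply/lfunP => x; dsimp. Qed.

Lemma T_qr : quiver_rep L_src L_tgt eT aT.
Proof.
split.
- move=> i j; rewrite te_mulE /= dlact0 dract0 addr0 (q_ee hq).
  by case: eqP.
- rewrite /eT !big_ord_recl big_ord0 /=.
  case: hq => _ h _; rewrite te_oneE -h !big_ord_recl big_ord0 !te_addE /= !addr0.
  by [].
- case; rewrite /= ?vtxE; try tev.
  all: try by rewrite (q_xae hq) /= (q_ea hq).
Qed.




Lemma T_rel : L_rel lam eT aT.
Proof.
split; split; try split.
all: tev.
Qed.
End BPart.

Definition Ls (k : LArr) : 'I_6 := match k with | La_alpha => o 2 | La_beta => o 3 | La_gamma => o 3 | La_delta => o 0 | La_eps => o 1 | La_eta => o 4 | La_xi => o 4 | La_rho => o 1 | La_sigma => o 2 | La_mu => o 5 | La_nu => o 0 | La_omega => o 5 end.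
Definition Lt (k : LArr) : 'I_6 := match k with | La_alpha => o 0 | La_beta => o 1 | La_gamma => o 0 | La_delta => o 4 | La_eps => o 4 | La_eta => o 3 | La_xi => o 2 | La_rho => o 5 | La_sigma => o 1 | La_mu => o 2 | La_nu => o 5 | La_omega => o 3 end.
Lemma LsE : L_src =1 Ls. Proof. by case; rewrite /= vtxE. Qed.
Lemma LtE : L_tgt =1 Lt. Proof. by case; rewrite /= vtxE. Qed.

Section APart.
Variables (K : fieldType) (lam : K) (hlam : lam != 0) (A : algType K) (eA : 'I_6 -> A) (aA : LArr -> A).
Hypotheses (hqA0 : quiver_rep L_src L_tgt eA aA) (hrA : L_rel lam eA aA).
Lemma hqA : quiver_rep Ls Lt eA aA.
Proof. by case: hqA0 => h1 h2 h3; split => // k; rewrite -LsE -LtE. Qed.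
Definition PA (i : 'I_36) : A := nth 0 [:: eA (o 0); eA (o 1); eA (o 2); eA (o 3); eA (o 4); eA (o 5); aA La_alpha; aA La_sigma; aA La_gamma; aA La_beta; aA La_xi; aA La_eta; aA La_mu; aA La_omega; aA La_eta * aA La_gamma; aA La_eta * aA La_beta; aA La_mu * aA La_alpha; aA La_mu * aA La_sigma; aA La_delta * aA La_eta * aA La_gamma; aA La_eps * aA La_eta * aA La_beta; aA La_alpha * aA La_delta * aA La_xi; aA La_beta * aA La_eps * aA La_eta; aA La_eta * aA La_beta * aA La_eps; aA La_mu * aA La_alpha * aA La_nu; aA La_delta * aA La_xi; aA La_eps * aA La_xi; aA La_delta * aA La_eta; aA La_eps * aA La_eta; aA La_alpha * aA La_delta; aA La_beta * aA La_eps; aA La_alpha * aA La_nu; aA La_beta * aA La_rho; aA La_delta; aA La_eps; aA La_nu; aA La_rho] i.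
Lemma sclM (k : K) (x y : A) : k *: x * y = k *: (x * y). Proof. by rewrite scalerAl. Qed.
Ltac dA := case: hrA => [[? ? ? ? ?] [? ? ? ? ?] [? ?] [? ? ? ? ?] [[? ? ? ?] ? ? ?]].

Lemma rL1 : aA La_delta * aA La_eta = aA La_nu * aA La_omega. Proof. by dA. Qed.
Lemma rL1x x : x * aA La_delta * aA La_eta = x * aA La_nu * aA La_omega. Proof. by rewrite -mulrA rL1 mulrA. Qed.
Lemma rL1b : aA La_nu * aA La_omega = aA La_delta * aA La_eta. Proof. by rewrite rL1. Qed.
Lemma rL1bx x : x * aA La_nu * aA La_omega = x * aA La_delta * aA La_eta. Proof. by rewrite -mulrA rL1b mulrA. Qed.
Lemma rL2 : aA La_eta * aA La_gamma = aA La_xi * aA La_alpha. Proof. by dA. Qed.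
Lemma rL2x x : x * aA La_eta * aA La_gamma = x * aA La_xi * aA La_alpha. Proof. by rewrite -mulrA rL2 mulrA. Qed.
Lemma rL2b : aA La_xi * aA La_alpha = aA La_eta * aA La_gamma. Proof. by rewrite rL2. Qed.
Lemma rL2bx x : x * aA La_xi * aA La_alpha = x * aA La_eta * aA La_gamma. Proof. by rewrite -mulrA rL2b mulrA. Qed.
Lemma rL3 : aA La_gamma * aA La_delta = lam *: (aA La_beta * aA La_eps). Proof. by dA. Qed.
Lemma rL3x x : x * aA La_gamma * aA La_delta = lam *: (x * aA La_beta * aA La_eps). Proof. by rewrite -mulrA rL3 -scalerAr mulrA. Qed.
Lemma rL3b : aA La_beta * aA La_eps = lam^-1 *: (aA La_gamma * aA La_delta). Proof. by rewrite rL3 scalerA mulVf // scale1r. Qed.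
Lemma rL3bx x : x * aA La_beta * aA La_eps = lam^-1 *: (x * aA La_gamma * aA La_delta). Proof. by rewrite -mulrA rL3b -scalerAr mulrA. Qed.
Lemma rL4 : aA La_rho * aA La_omega = lam *: (aA La_eps * aA La_eta). Proof. by dA. Qed.
Lemma rL4x x : x * aA La_rho * aA La_omega = lam *: (x * aA La_eps * aA La_eta). Proof. by rewrite -mulrA rL4 -scalerAr mulrA. Qed.
Lemma rL4b : aA La_eps * aA La_eta = lam^-1 *: (aA La_rho * aA La_omega). Proof. by rewrite rL4 scalerA mulVf // scale1r. Qed.
Lemma rL4bx x : x * aA La_eps * aA La_eta = lam^-1 *: (x * aA La_rho * aA La_omega). Proof. by rewrite -mulrA rL4b -scalerAr mulrA. Qed.
Lemma rL5 : aA La_omega * aA La_beta = aA La_mu * aA La_sigma. Proof. by dA. Qed.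
Lemma rL5x x : x * aA La_omega * aA La_beta = x * aA La_mu * aA La_sigma. Proof. by rewrite -mulrA rL5 mulrA. Qed.
Lemma rL5b : aA La_mu * aA La_sigma = aA La_omega * aA La_beta. Proof. by rewrite rL5. Qed.
Lemma rL5bx x : x * aA La_mu * aA La_sigma = x * aA La_omega * aA La_beta. Proof. by rewrite -mulrA rL5b mulrA. Qed.
Lemma rL6 : aA La_beta * aA La_rho = aA La_gamma * aA La_nu. Proof. by dA. Qed.
Lemma rL6x x : x * aA La_beta * aA La_rho = x * aA La_gamma * aA La_nu. Proof. by rewrite -mulrA rL6 mulrA. Qed.
Lemma rL6b : aA La_gamma * aA La_nu = aA La_beta * aA La_rho. Proof. by rewrite rL6. Qed.
Lemma rL6bx x : x * aA La_gamma * aA La_nu = x * aA La_beta * aA La_rho. Proof. by rewrite -mulrA rL6b mulrA. Qed.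
Lemma rL7 : aA La_sigma * aA La_eps = aA La_alpha * aA La_delta. Proof. by dA. Qed.
Lemma rL7x x : x * aA La_sigma * aA La_eps = x * aA La_alpha * aA La_delta. Proof. by rewrite -mulrA rL7 mulrA. Qed.
Lemma rL7b : aA La_alpha * aA La_delta = aA La_sigma * aA La_eps. Proof. by rewrite rL7. Qed.
Lemma rL7bx x : x * aA La_alpha * aA La_delta = x * aA La_sigma * aA La_eps. Proof. by rewrite -mulrA rL7b mulrA. Qed.
Lemma rL8 : aA La_eps * aA La_xi = aA La_rho * aA La_mu. Proof. by dA. Qed.
Lemma rL8x x : x * aA La_eps * aA La_xi = x * aA La_rho * aA La_mu. Proof. by rewrite -mulrA rL8 mulrA. Qed.
Lemma rL8b : aA La_rho * aA La_mu = aA La_eps * aA La_xi. Proof. by rewrite rL8. Qed.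
Lemma rL8bx x : x * aA La_rho * aA La_mu = x * aA La_eps * aA La_xi. Proof. by rewrite -mulrA rL8b mulrA. Qed.
Lemma rL9 : aA La_xi * aA La_sigma = lam *: (aA La_eta * aA La_beta). Proof. by dA. Qed.
Lemma rL9x x : x * aA La_xi * aA La_sigma = lam *: (x * aA La_eta * aA La_beta). Proof. by rewrite -mulrA rL9 -scalerAr mulrA. Qed.
Lemma rL9b : aA La_eta * aA La_beta = lam^-1 *: (aA La_xi * aA La_sigma). Proof. by rewrite rL9 scalerA mulVf // scale1r. Qed.
Lemma rL9bx x : x * aA La_eta * aA La_beta = lam^-1 *: (x * aA La_xi * aA La_sigma). Proof. by rewrite -mulrA rL9b -scalerAr mulrA. Qed.
Lemma rL10 : aA La_alpha * aA La_nu = aA La_sigma * aA La_rho. Proof. by dA. Qed.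
Lemma rL10x x : x * aA La_alpha * aA La_nu = x * aA La_sigma * aA La_rho. Proof. by rewrite -mulrA rL10 mulrA. Qed.
Lemma rL10b : aA La_sigma * aA La_rho = aA La_alpha * aA La_nu. Proof. by rewrite rL10. Qed.
Lemma rL10bx x : x * aA La_sigma * aA La_rho = x * aA La_alpha * aA La_nu. Proof. by rewrite -mulrA rL10b mulrA. Qed.
Lemma rL11 : aA La_nu * aA La_mu = aA La_delta * aA La_xi. Proof. by dA. Qed.
Lemma rL11x x : x * aA La_nu * aA La_mu = x * aA La_delta * aA La_xi. Proof. by rewrite -mulrA rL11 mulrA. Qed.
Lemma rL11b : aA La_delta * aA La_xi = aA La_nu * aA La_mu. Proof. by rewrite rL11. Qed.
Lemma rL11bx x : x * aA La_delta * aA La_xi = x * aA La_nu * aA La_mu. Proof. by rewrite -mulrA rL11b mulrA. Qed.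
Lemma rL12 : aA La_mu * aA La_alpha = aA La_omega * aA La_gamma. Proof. by dA. Qed.
Lemma rL12x x : x * aA La_mu * aA La_alpha = x * aA La_omega * aA La_gamma. Proof. by rewrite -mulrA rL12 mulrA. Qed.
Lemma rL12b : aA La_omega * aA La_gamma = aA La_mu * aA La_alpha. Proof. by rewrite rL12. Qed.
Lemma rL12bx x : x * aA La_omega * aA La_gamma = x * aA La_mu * aA La_alpha. Proof. by rewrite -mulrA rL12b mulrA. Qed.
Lemma zL1 : aA La_delta * aA La_eta * aA La_beta = 0. Proof. by dA. Qed.
Lemma zL1x x : x * aA La_delta * aA La_eta * aA La_beta = 0. Proof. by rewrite -!mulrA (mulrA (aA La_delta)) zL1 mulr0. Qed.
Lemma zL2 : aA La_eta * aA La_gamma * aA La_nu = 0. Proof. by dA. Qed.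
Lemma zL2x x : x * aA La_eta * aA La_gamma * aA La_nu = 0. Proof. by rewrite -!mulrA (mulrA (aA La_eta)) zL2 mulr0. Qed.
Lemma zL3 : aA La_gamma * aA La_delta * aA La_xi = 0. Proof. by dA. Qed.
Lemma zL3x x : x * aA La_gamma * aA La_delta * aA La_xi = 0. Proof. by rewrite -!mulrA (mulrA (aA La_gamma)) zL3 mulr0. Qed.
Lemma zL4 : aA La_rho * aA La_omega * aA La_gamma = 0. Proof. by dA. Qed.
Lemma zL4x x : x * aA La_rho * aA La_omega * aA La_gamma = 0. Proof. by rewrite -!mulrA (mulrA (aA La_rho)) zL4 mulr0. Qed.
Lemma zL5 : aA La_omega * aA La_beta * aA La_eps = 0. Proof. by dA. Qed.
Lemma zL5x x : x * aA La_omega * aA La_beta * aA La_eps = 0. Proof. by rewrite -!mulrA (mulrA (aA La_omega)) zL5 mulr0. Qed.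
Lemma zL6 : aA La_beta * aA La_rho * aA La_mu = 0. Proof. by dA. Qed.
Lemma zL6x x : x * aA La_beta * aA La_rho * aA La_mu = 0. Proof. by rewrite -!mulrA (mulrA (aA La_beta)) zL6 mulr0. Qed.
Lemma zL7 : aA La_sigma * aA La_eps * aA La_eta = 0. Proof. by dA. Qed.
Lemma zL7x x : x * aA La_sigma * aA La_eps * aA La_eta = 0. Proof. by rewrite -!mulrA (mulrA (aA La_sigma)) zL7 mulr0. Qed.
Lemma zL8 : aA La_eps * aA La_xi * aA La_alpha = 0. Proof. by dA. Qed.
Lemma zL8x x : x * aA La_eps * aA La_xi * aA La_alpha = 0. Proof. by rewrite -!mulrA (mulrA (aA La_eps)) zL8 mulr0. Qed.
Lemma zL9 : aA La_xi * aA La_sigma * aA La_rho = 0. Proof. by dA. Qed.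
Lemma zL9x x : x * aA La_xi * aA La_sigma * aA La_rho = 0. Proof. by rewrite -!mulrA (mulrA (aA La_xi)) zL9 mulr0. Qed.
Lemma zL10 : aA La_alpha * aA La_nu * aA La_omega = 0. Proof. by dA. Qed.
Lemma zL10x x : x * aA La_alpha * aA La_nu * aA La_omega = 0. Proof. by rewrite -!mulrA (mulrA (aA La_alpha)) zL10 mulr0. Qed.
Lemma zL11 : aA La_nu * aA La_mu * aA La_sigma = 0. Proof. by dA. Qed.
Lemma zL11x x : x * aA La_nu * aA La_mu * aA La_sigma = 0. Proof. by rewrite -!mulrA (mulrA (aA La_nu)) zL11 mulr0. Qed.
Lemma zL12 : aA La_mu * aA La_alpha * aA La_delta = 0. Proof. by dA. Qed.
Lemma zL12x x : x * aA La_mu * aA La_alpha * aA La_delta = 0. Proof. by rewrite -!mulrA (mulrA (aA La_mu)) zL12 mulr0. Qed.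

Ltac qsA := rewrite ?(q_ee hqA) ?(q_xee hqA) ?(q_ea hqA) ?(q_xea hqA) ?(q_ae hqA) ?(q_xae hqA) /= ?oeq /=.
Ltac killA := repeat match goal with
  | |- context [?x * aA ?k * aA ?l] => rewrite (q_xaa0 hqA x (k:=k) (l:=l)); [|by []]
  | |- context [aA ?k * aA ?l] => rewrite (q_aa0 hqA (k:=k) (l:=l)); [|by []]
  end.
Ltac asimp := rewrite ?mulrA; do 3 qsA; killA; rewrite ?mul0r ?mulr0.

Lemma PA_e v j : inspan PA (eA v * PA j).
Proof.
ocase v; ocase j; rewrite [X in _ * X]/PA /=; asimp; first [exact: inspan0 | exact: (inspanP1 PA (@Ordinal 36 0 isT)) | exact: (inspanP1 PA (@Ordinal 36 1 isT)) | exact: (inspanP1 PA (@Ordinal 36 2 isT)) | exact: (inspanP1 PA (@Ordinal 36 3 isT)) | exact: (inspanP1 PA (@Ordinal 36 4 isT)) | exact: (inspanP1 PA (@Ordinal 36 5 isT)) | exact: (inspanP1 PA (@Ordinal 36 6 isT)) | exact: (inspanP1 PA (@Ordinal 36 7 isT)) | exact: (inspanP1 PA (@Ordinal 36 8 isT)) | exact: (inspanP1 PA (@Ordinal 36 9 isT)) | exact: (inspanP1 PA (@Ordinal 36 10 isT)) | exact: (inspanP1 PA (@Ordinal 36 11 isT)) | exact: (inspanP1 PA (@Ordinal 36 12 isT)) | exact: (inspanP1 PA (@Ordinal 36 13 isT)) | exact: (inspanP1 PA (@Ordinal 36 14 isT)) | exact: (inspanP1 PA (@Ordinal 36 15 isT))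 | exact: (inspanP1 PA (@Ordinal 36 16 isT)) | exact: (inspanP1 PA (@Ordinal 36 17 isT)) | exact: (inspanP1 PA (@Ordinal 36 18 isT)) | exact: (inspanP1 PA (@Ordinal 36 19 isT)) | exact: (inspanP1 PA (@Ordinal 36 20 isT)) | exact: (inspanP1 PA (@Ordinal 36 21 isT)) | exact: (inspanP1 PA (@Ordinal 36 22 isT)) | exact: (inspanP1 PA (@Ordinal 36 23 isT)) | exact: (inspanP1 PA (@Ordinal 36 24 isT)) | exact: (inspanP1 PA (@Ordinal 36 25 isT)) | exact: (inspanP1 PA (@Ordinal 36 26 isT)) | exact: (inspanP1 PA (@Ordinal 36 27 isT)) | exact: (inspanP1 PA (@Ordinal 36 28 isT)) | exact: (inspanP1 PA (@Ordinal 36 29 isT)) | exact: (inspanP1 PA (@Ordinal 36 30 isT)) | exact: (inspanP1 PA (@Ordinal 36 31 isT)) | exact: (inspanP1 PA (@Ordinal 36 32 isT)) | exact: (inspanP1 PA (@Ordinal 36 33 isT)) | exact: (inspanP1 PA (@Ordinal 36 34 isT)) | exact: (inspanP1 PA (@Ordinal 36 35 isT))].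
Qed.
Lemma PA_a_al j : inspan PA (aA La_alpha * PA j).
Proof.
ocase j; rewrite [X in _ * X]/PA /= ?mulrA.
- rewrite (q_ae hqA) /= ?oeq /=; rewrite ?scalerA; first [exact: (inspanP1 PA (@Ordinal 36 6 isT)) | exact: (inspanP PA _ (@Ordinal 36 6 isT))].
- asimp; exact: inspan0.
- asimp; exact: inspan0.
- asimp; exact: inspan0.
- asimp; exact: inspan0.
- asimp; exact: inspan0.
- asimp; exact: inspan0.
- asimp; exact: inspan0.
- asimp; exact: inspan0.
- asimp; exact: inspan0.
- asimp; exact: inspan0.
- asimp; exact: inspan0.
- asimp; exact: inspan0.
- asimp; exact: inspan0.
- asimp; exact: inspan0.
- asimp; exact: inspan0.
- asimp; exact: inspan0.
- asimp; exact: inspan0.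
- rewrite rL7b ?sclM ?scalerA; rewrite zL7 ?mul0r ?scaler0 ?mulr0; exact: inspan0.
- asimp; exact: inspan0.
- asimp; exact: inspan0.
- asimp; exact: inspan0.
- asimp; exact: inspan0.
- asimp; exact: inspan0.
- rewrite ?scalerA; first [exact: (inspanP1 PA (@Ordinal 36 20 isT)) | exact: (inspanP PA _ (@Ordinal 36 20 isT))].
- asimp; exact: inspan0.
- rewrite rL7b ?sclM ?scalerA; rewrite zL7 ?mul0r ?scaler0 ?mulr0; exact: inspan0.
- asimp; exact: inspan0.
- asimp; exact: inspan0.
- asimp; exact: inspan0.
- asimp; exact: inspan0.
- asimp; exact: inspan0.
- rewrite ?scalerA; first [exact: (inspanP1 PA (@Ordinal 36 28 isT)) | exact: (inspanP PA _ (@Ordinal 36 28 isT))].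
- asimp; exact: inspan0.
- rewrite ?scalerA; first [exact: (inspanP1 PA (@Ordinal 36 30 isT)) | exact: (inspanP PA _ (@Ordinal 36 30 isT))].
- asimp; exact: inspan0.
Qed.
Lemma PA_a_be j : inspan PA (aA La_beta * PA j).
Proof.
ocase j; rewrite [X in _ * X]/PA /= ?mulrA.
- asimp; exact: inspan0.
- rewrite (q_ae hqA) /= ?oeq /=; rewrite ?scalerA; first [exact: (inspanP1 PA (@Ordinal 36 9 isT)) | exact: (inspanP PA _ (@Ordinal 36 9 isT))].
- asimp; exact: inspan0.
- asimp; exact: inspan0.
- asimp; exact: inspan0.
- asimp; exact: inspan0.
- asimp; exact: inspan0.
- asimp; exact: inspan0.
- asimp; exact: inspan0.
- asimp; exact: inspan0.
- asimp; exact: inspan0.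
- asimp; exact: inspan0.
- asimp; exact: inspan0.
- asimp; exact: inspan0.
- asimp; exact: inspan0.
- asimp; exact: inspan0.
- asimp; exact: inspan0.
- asimp; exact: inspan0.
- asimp; exact: inspan0.
- rewrite rL3b ?sclM ?scalerA; rewrite zL1x ?mul0r ?scaler0 ?mulr0; exact: inspan0.
- asimp; exact: inspan0.
- asimp; exact: inspan0.
- asimp; exact: inspan0.
- asimp; exact: inspan0.
- asimp; exact: inspan0.
- rewrite rL3b ?sclM ?scalerA; rewrite zL3 ?mul0r ?scaler0 ?mulr0; exact: inspan0.
- asimp; exact: inspan0.
- rewrite ?scalerA; first [exact: (inspanP1 PA (@Ordinal 36 21 isT)) | exact: (inspanP PA _ (@Ordinal 36 21 isT))].
- asimp; exact: inspan0.
- asimp; exact: inspan0.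
- asimp; exact: inspan0.
- asimp; exact: inspan0.
- asimp; exact: inspan0.
- rewrite ?scalerA; first [exact: (inspanP1 PA (@Ordinal 36 29 isT)) | exact: (inspanP PA _ (@Ordinal 36 29 isT))].
- asimp; exact: inspan0.
- rewrite ?scalerA; first [exact: (inspanP1 PA (@Ordinal 36 31 isT)) | exact: (inspanP PA _ (@Ordinal 36 31 isT))].
Qed.
Lemma PA_a_ga j : inspan PA (aA La_gamma * PA j).
Proof.
ocase j; rewrite [X in _ * X]/PA /= ?mulrA.
- rewrite (q_ae hqA) /= ?oeq /=; rewrite ?scalerA; first [exact: (inspanP1 PA (@Ordinal 36 8 isT)) | exact: (inspanP PA _ (@Ordinal 36 8 isT))].
- asimp; exact: inspan0.
- asimp; exact: inspan0.
- asimp; exact: inspan0.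
- asimp; exact: inspan0.
- asimp; exact: inspan0.
- asimp; exact: inspan0.
- asimp; exact: inspan0.
- asimp; exact: inspan0.
- asimp; exact: inspan0.
- asimp; exact: inspan0.
- asimp; exact: inspan0.
- asimp; exact: inspan0.
- asimp; exact: inspan0.
- asimp; exact: inspan0.
- asimp; exact: inspan0.
- asimp; exact: inspan0.
- asimp; exact: inspan0.
- rewrite rL2x ?sclM ?scalerA; rewrite zL3 ?mul0r ?scaler0 ?mulr0; exact: inspan0.
- asimp; exact: inspan0.
- asimp; exact: inspan0.
- asimp; exact: inspan0.
- asimp; exact: inspan0.
- asimp; exact: inspan0.
- rewrite zL3 ?mul0r ?scaler0 ?mulr0; exact: inspan0.
- asimp; exact: inspan0.
- rewrite rL3 ?sclM ?scalerA; rewrite ?scalerA; first [exact: (inspanP1 PA (@Ordinal 36 21 isT)) | exact: (inspanP PA _ (@Ordinal 36 21 isT))].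
- asimp; exact: inspan0.
- asimp; exact: inspan0.
- asimp; exact: inspan0.
- asimp; exact: inspan0.
- asimp; exact: inspan0.
- rewrite rL3 ?sclM ?scalerA; rewrite ?scalerA; first [exact: (inspanP1 PA (@Ordinal 36 29 isT)) | exact: (inspanP PA _ (@Ordinal 36 29 isT))].
- asimp; exact: inspan0.
- rewrite rL6b ?sclM ?scalerA; rewrite ?scalerA; first [exact: (inspanP1 PA (@Ordinal 36 31 isT)) | exact: (inspanP PA _ (@Ordinal 36 31 isT))].
- asimp; exact: inspan0.
Qed.
Lemma PA_a_de j : inspan PA (aA La_delta * PA j).
Proof.
ocase j; rewrite [X in _ * X]/PA /= ?mulrA.
- asimp; exact: inspan0.
- asimp; exact: inspan0.
- asimp; exact: inspan0.
- asimp; exact: inspan0.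
- rewrite (q_ae hqA) /= ?oeq /=; rewrite ?scalerA; first [exact: (inspanP1 PA (@Ordinal 36 32 isT)) | exact: (inspanP PA _ (@Ordinal 36 32 isT))].
- asimp; exact: inspan0.
- asimp; exact: inspan0.
- asimp; exact: inspan0.
- asimp; exact: inspan0.
- asimp; exact: inspan0.
- rewrite ?scalerA; first [exact: (inspanP1 PA (@Ordinal 36 24 isT)) | exact: (inspanP PA _ (@Ordinal 36 24 isT))].
- rewrite ?scalerA; first [exact: (inspanP1 PA (@Ordinal 36 26 isT)) | exact: (inspanP PA _ (@Ordinal 36 26 isT))].
- asimp; exact: inspan0.
- asimp; exact: inspan0.
- rewrite ?scalerA; first [exact: (inspanP1 PA (@Ordinal 36 18 isT)) | exact: (inspanP PA _ (@Ordinal 36 18 isT))].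
- rewrite zL1 ?mul0r ?scaler0 ?mulr0; exact: inspan0.
- asimp; exact: inspan0.
- asimp; exact: inspan0.
- asimp; exact: inspan0.
- asimp; exact: inspan0.
- asimp; exact: inspan0.
- asimp; exact: inspan0.
- rewrite zL1 ?mul0r ?scaler0 ?mulr0; exact: inspan0.
- asimp; exact: inspan0.
- asimp; exact: inspan0.
- asimp; exact: inspan0.
- asimp; exact: inspan0.
- asimp; exact: inspan0.
- asimp; exact: inspan0.
- asimp; exact: inspan0.
- asimp; exact: inspan0.
- asimp; exact: inspan0.
- asimp; exact: inspan0.
- asimp; exact: inspan0.
- asimp; exact: inspan0.
- asimp; exact: inspan0.
Qed.
Lemma PA_a_ep j : inspan PA (aA La_eps * PA j).
Proof.
ocase j; rewrite [X in _ * X]/PA /= ?mulrA.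
- asimp; exact: inspan0.
- asimp; exact: inspan0.
- asimp; exact: inspan0.
- asimp; exact: inspan0.
- rewrite (q_ae hqA) /= ?oeq /=; rewrite ?scalerA; first [exact: (inspanP1 PA (@Ordinal 36 33 isT)) | exact: (inspanP PA _ (@Ordinal 36 33 isT))].
- asimp; exact: inspan0.
- asimp; exact: inspan0.
- asimp; exact: inspan0.
- asimp; exact: inspan0.
- asimp; exact: inspan0.
- rewrite ?scalerA; first [exact: (inspanP1 PA (@Ordinal 36 25 isT)) | exact: (inspanP PA _ (@Ordinal 36 25 isT))].
- rewrite ?scalerA; first [exact: (inspanP1 PA (@Ordinal 36 27 isT)) | exact: (inspanP PA _ (@Ordinal 36 27 isT))].
- asimp; exact: inspan0.
- asimp; exact: inspan0.
- rewrite rL4b ?sclM ?scalerA; rewrite zL4 ?mul0r ?scaler0 ?mulr0; exact: inspan0.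
- rewrite ?scalerA; first [exact: (inspanP1 PA (@Ordinal 36 19 isT)) | exact: (inspanP PA _ (@Ordinal 36 19 isT))].
- asimp; exact: inspan0.
- asimp; exact: inspan0.
- asimp; exact: inspan0.
- asimp; exact: inspan0.
- asimp; exact: inspan0.
- asimp; exact: inspan0.
- rewrite rL4b ?sclM ?scalerA; rewrite zL5x ?mul0r ?scaler0 ?mulr0; exact: inspan0.
- asimp; exact: inspan0.
- asimp; exact: inspan0.
- asimp; exact: inspan0.
- asimp; exact: inspan0.
- asimp; exact: inspan0.
- asimp; exact: inspan0.
- asimp; exact: inspan0.
- asimp; exact: inspan0.
- asimp; exact: inspan0.
- asimp; exact: inspan0.
- asimp; exact: inspan0.
- asimp; exact: inspan0.
- asimp; exact: inspan0.
Qed.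
Lemma PA_a_et j : inspan PA (aA La_eta * PA j).
Proof.
ocase j; rewrite [X in _ * X]/PA /= ?mulrA.
- asimp; exact: inspan0.
- asimp; exact: inspan0.
- asimp; exact: inspan0.
- rewrite (q_ae hqA) /= ?oeq /=; rewrite ?scalerA; first [exact: (inspanP1 PA (@Ordinal 36 11 isT)) | exact: (inspanP PA _ (@Ordinal 36 11 isT))].
- asimp; exact: inspan0.
- asimp; exact: inspan0.
- asimp; exact: inspan0.
- asimp; exact: inspan0.
- rewrite ?scalerA; first [exact: (inspanP1 PA (@Ordinal 36 14 isT)) | exact: (inspanP PA _ (@Ordinal 36 14 isT))].
- rewrite ?scalerA; first [exact: (inspanP1 PA (@Ordinal 36 15 isT)) | exact: (inspanP PA _ (@Ordinal 36 15 isT))].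
- asimp; exact: inspan0.
- asimp; exact: inspan0.
- asimp; exact: inspan0.
- asimp; exact: inspan0.
- asimp; exact: inspan0.
- asimp; exact: inspan0.
- asimp; exact: inspan0.
- asimp; exact: inspan0.
- asimp; exact: inspan0.
- asimp; exact: inspan0.
- asimp; exact: inspan0.
- rewrite rL9b ?sclM ?scalerA; rewrite zL7x ?mul0r ?scaler0 ?mulr0; exact: inspan0.
- asimp; exact: inspan0.
- asimp; exact: inspan0.
- asimp; exact: inspan0.
- asimp; exact: inspan0.
- asimp; exact: inspan0.
- asimp; exact: inspan0.
- asimp; exact: inspan0.
- rewrite ?scalerA; first [exact: (inspanP1 PA (@Ordinal 36 22 isT)) | exact: (inspanP PA _ (@Ordinal 36 22 isT))].
- asimp; exact: inspan0.
- rewrite rL9b ?sclM ?scalerA; rewrite zL9 ?mul0r ?scaler0 ?mulr0; exact: inspan0.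
- asimp; exact: inspan0.
- asimp; exact: inspan0.
- asimp; exact: inspan0.
- asimp; exact: inspan0.
Qed.
Lemma PA_a_xi j : inspan PA (aA La_xi * PA j).
Proof.
ocase j; rewrite [X in _ * X]/PA /= ?mulrA.
- asimp; exact: inspan0.
- asimp; exact: inspan0.
- rewrite (q_ae hqA) /= ?oeq /=; rewrite ?scalerA; first [exact: (inspanP1 PA (@Ordinal 36 10 isT)) | exact: (inspanP PA _ (@Ordinal 36 10 isT))].
- asimp; exact: inspan0.
- asimp; exact: inspan0.
- asimp; exact: inspan0.
- rewrite rL2b ?sclM ?scalerA; rewrite ?scalerA; first [exact: (inspanP1 PA (@Ordinal 36 14 isT)) | exact: (inspanP PA _ (@Ordinal 36 14 isT))].
- rewrite rL9 ?sclM ?scalerA; rewrite ?scalerA; first [exact: (inspanP1 PA (@Ordinal 36 15 isT)) | exact: (inspanP PA _ (@Ordinal 36 15 isT))].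
- asimp; exact: inspan0.
- asimp; exact: inspan0.
- asimp; exact: inspan0.
- asimp; exact: inspan0.
- asimp; exact: inspan0.
- asimp; exact: inspan0.
- asimp; exact: inspan0.
- asimp; exact: inspan0.
- asimp; exact: inspan0.
- asimp; exact: inspan0.
- asimp; exact: inspan0.
- asimp; exact: inspan0.
- rewrite rL2b ?sclM ?scalerA; rewrite zL3x ?mul0r ?scaler0 ?mulr0; exact: inspan0.
- asimp; exact: inspan0.
- asimp; exact: inspan0.
- asimp; exact: inspan0.
- asimp; exact: inspan0.
- asimp; exact: inspan0.
- asimp; exact: inspan0.
- asimp; exact: inspan0.
- rewrite rL2b ?sclM ?scalerA; rewrite rL3x ?sclM ?scalerA; rewrite ?scalerA; first [exact: (inspanP1 PA (@Ordinal 36 22 isT)) | exact: (inspanP PA _ (@Ordinal 36 22 isT))].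
- asimp; exact: inspan0.
- rewrite rL2b ?sclM ?scalerA; rewrite zL2 ?mul0r ?scaler0 ?mulr0; exact: inspan0.
- asimp; exact: inspan0.
- asimp; exact: inspan0.
- asimp; exact: inspan0.
- asimp; exact: inspan0.
- asimp; exact: inspan0.
Qed.
Lemma PA_a_rh j : inspan PA (aA La_rho * PA j).
Proof.
ocase j; rewrite [X in _ * X]/PA /= ?mulrA.
- asimp; exact: inspan0.
- asimp; exact: inspan0.
- asimp; exact: inspan0.
- asimp; exact: inspan0.
- asimp; exact: inspan0.
- rewrite (q_ae hqA) /= ?oeq /=; rewrite ?scalerA; first [exact: (inspanP1 PA (@Ordinal 36 35 isT)) | exact: (inspanP PA _ (@Ordinal 36 35 isT))].
- asimp; exact: inspan0.
- asimp; exact: inspan0.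
- asimp; exact: inspan0.
- asimp; exact: inspan0.
- asimp; exact: inspan0.
- asimp; exact: inspan0.
- rewrite rL8b ?sclM ?scalerA; rewrite ?scalerA; first [exact: (inspanP1 PA (@Ordinal 36 25 isT)) | exact: (inspanP PA _ (@Ordinal 36 25 isT))].
- rewrite rL4 ?sclM ?scalerA; rewrite ?scalerA; first [exact: (inspanP1 PA (@Ordinal 36 27 isT)) | exact: (inspanP PA _ (@Ordinal 36 27 isT))].
- asimp; exact: inspan0.
- asimp; exact: inspan0.
- rewrite rL8b ?sclM ?scalerA; rewrite zL8 ?mul0r ?scaler0 ?mulr0; exact: inspan0.
- rewrite rL8b ?sclM ?scalerA; rewrite rL9x ?sclM ?scalerA; rewrite ?scalerA; first [exact: (inspanP1 PA (@Ordinal 36 19 isT)) | exact: (inspanP PA _ (@Ordinal 36 19 isT))].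
- asimp; exact: inspan0.
- asimp; exact: inspan0.
- asimp; exact: inspan0.
- asimp; exact: inspan0.
- asimp; exact: inspan0.
- rewrite rL8b ?sclM ?scalerA; rewrite zL8 ?mul0r ?scaler0 ?mulr0; exact: inspan0.
- asimp; exact: inspan0.
- asimp; exact: inspan0.
- asimp; exact: inspan0.
- asimp; exact: inspan0.
- asimp; exact: inspan0.
- asimp; exact: inspan0.
- asimp; exact: inspan0.
- asimp; exact: inspan0.
- asimp; exact: inspan0.
- asimp; exact: inspan0.
- asimp; exact: inspan0.
- asimp; exact: inspan0.
Qed.
Lemma PA_a_si j : inspan PA (aA La_sigma * PA j).
Proof.
ocase j; rewrite [X in _ * X]/PA /= ?mulrA.
- asimp; exact: inspan0.
- rewrite (q_ae hqA) /= ?oeq /=; rewrite ?scalerA; first [exact: (inspanP1 PA (@Ordinal 36 7 isT)) | exact: (inspanP PA _ (@Ordinal 36 7 isT))].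
- asimp; exact: inspan0.
- asimp; exact: inspan0.
- asimp; exact: inspan0.
- asimp; exact: inspan0.
- asimp; exact: inspan0.
- asimp; exact: inspan0.
- asimp; exact: inspan0.
- asimp; exact: inspan0.
- asimp; exact: inspan0.
- asimp; exact: inspan0.
- asimp; exact: inspan0.
- asimp; exact: inspan0.
- asimp; exact: inspan0.
- asimp; exact: inspan0.
- asimp; exact: inspan0.
- asimp; exact: inspan0.
- asimp; exact: inspan0.
- rewrite zL7 ?mul0r ?scaler0 ?mulr0; exact: inspan0.
- asimp; exact: inspan0.
- asimp; exact: inspan0.
- asimp; exact: inspan0.
- asimp; exact: inspan0.
- asimp; exact: inspan0.
- rewrite rL7 ?sclM ?scalerA; rewrite ?scalerA; first [exact: (inspanP1 PA (@Ordinal 36 20 isT)) | exact: (inspanP PA _ (@Ordinal 36 20 isT))].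
- asimp; exact: inspan0.
- rewrite zL7 ?mul0r ?scaler0 ?mulr0; exact: inspan0.
- asimp; exact: inspan0.
- asimp; exact: inspan0.
- asimp; exact: inspan0.
- asimp; exact: inspan0.
- asimp; exact: inspan0.
- rewrite rL7 ?sclM ?scalerA; rewrite ?scalerA; first [exact: (inspanP1 PA (@Ordinal 36 28 isT)) | exact: (inspanP PA _ (@Ordinal 36 28 isT))].
- asimp; exact: inspan0.
- rewrite rL10b ?sclM ?scalerA; rewrite ?scalerA; first [exact: (inspanP1 PA (@Ordinal 36 30 isT)) | exact: (inspanP PA _ (@Ordinal 36 30 isT))].
Qed.
Lemma PA_a_mu j : inspan PA (aA La_mu * PA j).
Proof.
ocase j; rewrite [X in _ * X]/PA /= ?mulrA.
- asimp; exact: inspan0.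
- asimp; exact: inspan0.
- rewrite (q_ae hqA) /= ?oeq /=; rewrite ?scalerA; first [exact: (inspanP1 PA (@Ordinal 36 12 isT)) | exact: (inspanP PA _ (@Ordinal 36 12 isT))].
- asimp; exact: inspan0.
- asimp; exact: inspan0.
- asimp; exact: inspan0.
- rewrite ?scalerA; first [exact: (inspanP1 PA (@Ordinal 36 16 isT)) | exact: (inspanP PA _ (@Ordinal 36 16 isT))].
- rewrite ?scalerA; first [exact: (inspanP1 PA (@Ordinal 36 17 isT)) | exact: (inspanP PA _ (@Ordinal 36 17 isT))].
- asimp; exact: inspan0.
- asimp; exact: inspan0.
- asimp; exact: inspan0.
- asimp; exact: inspan0.
- asimp; exact: inspan0.
- asimp; exact: inspan0.
- asimp; exact: inspan0.
- asimp; exact: inspan0.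
- asimp; exact: inspan0.
- asimp; exact: inspan0.
- asimp; exact: inspan0.
- asimp; exact: inspan0.
- rewrite zL12 ?mul0r ?scaler0 ?mulr0; exact: inspan0.
- asimp; exact: inspan0.
- asimp; exact: inspan0.
- asimp; exact: inspan0.
- asimp; exact: inspan0.
- asimp; exact: inspan0.
- asimp; exact: inspan0.
- asimp; exact: inspan0.
- rewrite zL12 ?mul0r ?scaler0 ?mulr0; exact: inspan0.
- asimp; exact: inspan0.
- rewrite ?scalerA; first [exact: (inspanP1 PA (@Ordinal 36 23 isT)) | exact: (inspanP PA _ (@Ordinal 36 23 isT))].
- asimp; exact: inspan0.
- asimp; exact: inspan0.
- asimp; exact: inspan0.
- asimp; exact: inspan0.
- asimp; exact: inspan0.
Qed.
Lemma PA_a_nu j : inspan PA (aA La_nu * PA j).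
Proof.
ocase j; rewrite [X in _ * X]/PA /= ?mulrA.
- asimp; exact: inspan0.
- asimp; exact: inspan0.
- asimp; exact: inspan0.
- asimp; exact: inspan0.
- asimp; exact: inspan0.
- rewrite (q_ae hqA) /= ?oeq /=; rewrite ?scalerA; first [exact: (inspanP1 PA (@Ordinal 36 34 isT)) | exact: (inspanP PA _ (@Ordinal 36 34 isT))].
- asimp; exact: inspan0.
- asimp; exact: inspan0.
- asimp; exact: inspan0.
- asimp; exact: inspan0.
- asimp; exact: inspan0.
- asimp; exact: inspan0.
- rewrite rL11 ?sclM ?scalerA; rewrite ?scalerA; first [exact: (inspanP1 PA (@Ordinal 36 24 isT)) | exact: (inspanP PA _ (@Ordinal 36 24 isT))].
- rewrite rL1b ?sclM ?scalerA; rewrite ?scalerA; first [exact: (inspanP1 PA (@Ordinal 36 26 isT)) | exact: (inspanP PA _ (@Ordinal 36 26 isT))].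
- asimp; exact: inspan0.
- asimp; exact: inspan0.
- rewrite rL11 ?sclM ?scalerA; rewrite rL2bx ?sclM ?scalerA; rewrite ?scalerA; first [exact: (inspanP1 PA (@Ordinal 36 18 isT)) | exact: (inspanP PA _ (@Ordinal 36 18 isT))].
- rewrite zL11 ?mul0r ?scaler0 ?mulr0; exact: inspan0.
- asimp; exact: inspan0.
- asimp; exact: inspan0.
- asimp; exact: inspan0.
- asimp; exact: inspan0.
- asimp; exact: inspan0.
- rewrite rL10x ?sclM ?scalerA; rewrite zL11 ?mul0r ?scaler0 ?mulr0; exact: inspan0.
- asimp; exact: inspan0.
- asimp; exact: inspan0.
- asimp; exact: inspan0.
- asimp; exact: inspan0.
- asimp; exact: inspan0.
- asimp; exact: inspan0.
- asimp; exact: inspan0.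
- asimp; exact: inspan0.
- asimp; exact: inspan0.
- asimp; exact: inspan0.
- asimp; exact: inspan0.
- asimp; exact: inspan0.
Qed.
Lemma PA_a_om j : inspan PA (aA La_omega * PA j).
Proof.
ocase j; rewrite [X in _ * X]/PA /= ?mulrA.
- asimp; exact: inspan0.
- asimp; exact: inspan0.
- asimp; exact: inspan0.
- rewrite (q_ae hqA) /= ?oeq /=; rewrite ?scalerA; first [exact: (inspanP1 PA (@Ordinal 36 13 isT)) | exact: (inspanP PA _ (@Ordinal 36 13 isT))].
- asimp; exact: inspan0.
- asimp; exact: inspan0.
- asimp; exact: inspan0.
- asimp; exact: inspan0.
- rewrite rL12b ?sclM ?scalerA; rewrite ?scalerA; first [exact: (inspanP1 PA (@Ordinal 36 16 isT)) | exact: (inspanP PA _ (@Ordinal 36 16 isT))].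
- rewrite rL5 ?sclM ?scalerA; rewrite ?scalerA; first [exact: (inspanP1 PA (@Ordinal 36 17 isT)) | exact: (inspanP PA _ (@Ordinal 36 17 isT))].
- asimp; exact: inspan0.
- asimp; exact: inspan0.
- asimp; exact: inspan0.
- asimp; exact: inspan0.
- asimp; exact: inspan0.
- asimp; exact: inspan0.
- asimp; exact: inspan0.
- asimp; exact: inspan0.
- asimp; exact: inspan0.
- asimp; exact: inspan0.
- asimp; exact: inspan0.
- rewrite zL5 ?mul0r ?scaler0 ?mulr0; exact: inspan0.
- asimp; exact: inspan0.
- asimp; exact: inspan0.
- asimp; exact: inspan0.
- asimp; exact: inspan0.
- asimp; exact: inspan0.
- asimp; exact: inspan0.
- asimp; exact: inspan0.
- rewrite zL5 ?mul0r ?scaler0 ?mulr0; exact: inspan0.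
- asimp; exact: inspan0.
- rewrite rL5 ?sclM ?scalerA; rewrite rL10bx ?sclM ?scalerA; rewrite ?scalerA; first [exact: (inspanP1 PA (@Ordinal 36 23 isT)) | exact: (inspanP PA _ (@Ordinal 36 23 isT))].
- asimp; exact: inspan0.
- asimp; exact: inspan0.
- asimp; exact: inspan0.
- asimp; exact: inspan0.
Qed.
Lemma PA_a k j : inspan PA (aA k * PA j).
Proof. by case: k; [exact: PA_a_al | exact: PA_a_be | exact: PA_a_ga | exact: PA_a_de | exact: PA_a_ep | exact: PA_a_et | exact: PA_a_xi | exact: PA_a_rh | exact: PA_a_si | exact: PA_a_mu | exact: PA_a_nu | exact: PA_a_om]. Qed.
Lemma PA_1 : inspan PA 1.
Proof. case: hqA => _ <- _; apply: inspan_sum => v; ocase v; first [ exact: (inspanP1 PA (@Ordinal 36 0 isT)) | exact: (inspanP1 PA (@Ordinal 36 1 isT)) | exact: (inspanP1 PA (@Ordinal 36 2 isT)) | exact: (inspanP1 PA (@Ordinal 36 3 isT)) | exact: (inspanP1 PA (@Ordinal 36 4 isT)) | exact: (inspanP1 PA (@Ordinal 36 5 isT))]. Qed.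
Lemma L_refl (C : algType K) (f : C -> A) (e' : 'I_6 -> C) (a' : LArr -> C) :
  is_alg_hom f -> injective f -> (forall i, f (e' i) = eA i) -> (forall k, f (a' k) = aA k) ->
  L_rel lam eA aA -> L_rel lam e' a'.
Proof.
move=> [f1 f2 f3] fi fe fa H.
have f0 : f 0 = 0 by have := f1 1 0 0; rewrite !scale1r addr0 => h; apply: (addrI (f 0)); rewrite addr0 -h.
have fZ c x : f (c *: x) = c *: f x by have := f1 c x 0; rewrite !addr0 f0 addr0.
move: H => [[h1 h2 h3 h4 h5] [h6 h7 h8 h9 h10] [h11 h12] [h13 h14 h15 h16 h17] [[h18 h19 h20 h21] h22 h23 h24]].
by repeat split; apply: fi; rewrite ?fZ !f2 ?fa ?f0.
Qed.
Hypothesis hPA : presented_by L_src L_tgt (L_rel lam) eA aA.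
Lemma A_span x : inspan PA x.
Proof.
apply: (span_all hPA) => //; [exact: L_refl | exact: PA_1 | exact: PA_e | exact: PA_a].
Qed.
End APart.


Lemma oeqn (n i j : nat) (pi : (i < n)%N) (pj : (j < n)%N) : (Ordinal pi == Ordinal pj) = (i == j).
Proof. by []. Qed.

Section Rho.
Variables (K : fieldType) (lam : K).
Lemma sd_qr (cf : BArr -> K) : quiver_rep B_src B_tgt (fun i => sd 1 i i) (fun k => sd (cf k) (Bs k) (Bt k)).
Proof.
split.
- by move=> i j; rewrite sd_mul mulr1; case: eqP => // ->.
- by rewrite /sd; under eq_bigr do rewrite scale1r; rewrite -mx1_sum_delta.
- by move=> k; rewrite BsE BtE sd_mul eqxx mul1r sd_mul eqxx mulr1.
Qed.
Lemma sd_scale (c d : K) i j : c *: sd d i j = sd (c * d) i j.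
Proof. by rewrite /sd scalerA. Qed.
Lemma c1_rel : B_rel lam (fun i => sd (1 : K) i i) (fun k => sd (c1 lam k) (Bs k) (Bt k)).
Proof. by split; rewrite /= !sd_mul /= ?sd_scale; congr sd; ring. Qed.
Lemma c2_rel : B_rel lam (fun i => sd (1 : K) i i) (fun k => sd (c2 K k) (Bs k) (Bt k)).
Proof. by split; rewrite /= !sd_mul /= ?sd_scale; congr sd; ring. Qed.
End Rho.

Definition mm (K : fieldType) (lam : K) (q : 'I_18) : K :=
  nth 0 [:: lam; 1; lam; 1; 1; lam; lam; lam; lam; 1; lam; 1; lam; lam; lam; 1; lam; lam] q.

Section Main.
Variables (K : fieldType) (lam : K) (hlam : lam != 0).
Variables (B : falgType K) (eB : 'I_6 -> B) (aB : BArr -> B).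
Hypotheses (hqB : quiver_rep B_src B_tgt eB aB) (hrB : B_rel lam eB aB)
  (hPB : presented_by B_src B_tgt (B_rel lam) eB aB).
Variables (rho1 rho2 : B -> 'M[K]_6).
Hypotheses (rh1 : is_alg_hom rho1) (rh2 : is_alg_hom rho2)
  (r1e : forall i, rho1 (eB i) = sd 1 i i) (r2e : forall i, rho2 (eB i) = sd 1 i i)
  (r1a : forall k, rho1 (aB k) = sd (c1 lam k) (Bs k) (Bt k))
  (r2a : forall k, rho2 (aB k) = sd (c2 K k) (Bs k) (Bt k)).
Variables (A : algType K) (eA : 'I_6 -> A) (aA : LArr -> A).
Hypotheses (hqA : quiver_rep L_src L_tgt eA aA) (hrA : L_rel lam eA aA)
  (hPA : presented_by L_src L_tgt (L_rel lam) eA aA).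
Variable f : A -> TE B.
Hypotheses (hf : is_alg_hom f) (fe : forall i, f (eA i) = eT eB i)
  (fa : forall k, f (aA k) = aT lam aB rho1 rho2 k).

Lemma rhoM1 x y : rho1 (x * y) = rho1 x * rho1 y. Proof. by case: rh1. Qed.
Lemma rhoM2 x y : rho2 (x * y) = rho2 x * rho2 y. Proof. by case: rh2. Qed.
Lemma fM x y : f (x * y) = f x * f y. Proof. by case: hf. Qed.

Ltac xs := rewrite ?rhoM1 ?rhoM2 ?r1e ?r2e ?r1a ?r2a /=;
  rewrite ?mulrA ?mul0r ?mulr0 ?mul0r; do 6 (rewrite ?sd_mul ?entR ?entL /= ?oeq /= ?mul0r ?mulr0);
  rewrite ?mx0_entry ?sd_entry /= ?oeq /=.

Lemma fB (q : 'I_18) : f (PA eA aA (lshift 18 q)) = (XB eB aB q, 0).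
Proof.
ocase q; rewrite /PA /XB /= ?fM ?fe ?fa /eT /aT /= ?te_mulE /= ?dlact0 ?dract0 ?addr0 //.
Qed.

Lemma fD1 (q : 'I_18) : (f (PA eA aA (rshift 18 q))).1 = 0.
Proof.
ocase q; rewrite /PA /= ?fM ?fe ?fa /eT /aT /= ?te_mulE /= ?mul0r ?mulr0 ?mul0r //.
Qed.

Lemma fD2 (q r : 'I_18) : (f (PA eA aA (rshift 18 q))).2 (XB eB aB r) = if q == r then mm lam q else 0.
Proof.
ocase q; rewrite /PA /= ?fM ?fe ?fa /eT /aT /= ?te_mulE /=; dsimp;
  rewrite ?mul0r ?mulr0 ?mul0r ?(mentE _ _ _ rh1) ?(mentE _ _ _ rh2) ?scaleoE;
  ocase r; rewrite /XB /= ?oeqn /=; xs; rewrite /mm /=; ring.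
Qed.
End Main.


Section Main2.
Variables (K : fieldType) (lam : K) (hlam : lam != 0).
Variables (B : falgType K) (eB : 'I_6 -> B) (aB : BArr -> B).
Hypotheses (hqB : quiver_rep B_src B_tgt eB aB) (hrB : B_rel lam eB aB)
  (hPB : presented_by B_src B_tgt (B_rel lam) eB aB).
Variables (rho1 rho2 : B -> 'M[K]_6).
Hypotheses (rh1 : is_alg_hom rho1) (rh2 : is_alg_hom rho2)
  (r1e : forall i, rho1 (eB i) = sd 1 i i) (r2e : forall i, rho2 (eB i) = sd 1 i i)
  (r1a : forall k, rho1 (aB k) = sd (c1 lam k) (Bs k) (Bt k))
  (r2a : forall k, rho2 (aB k) = sd (c2 K k) (Bs k) (Bt k)).
Variables (A : algType K) (eA : 'I_6 -> A) (aA : LArr -> A).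
Hypotheses (hqA : quiver_rep L_src L_tgt eA aA) (hrA : L_rel lam eA aA)
  (hPA : presented_by L_src L_tgt (L_rel lam) eA aA).
Variable f : A -> TE B.
Hypotheses (hf : is_alg_hom f) (fe : forall i, f (eA i) = eT eB i)
  (fa : forall k, f (aA k) = aT lam aB rho1 rho2 k).

Let fB := fB hf fe fa.
Let fD1 := fD1 eA hf fa.
Let fD2 := fD2 rh1 rh2 r1e r2e r1a r2a eA hf fa.
Local Notation XB := (XB eB aB).
Local Notation PA := (PA eA aA).

Lemma f0 : f 0 = 0.
Proof. by case: hf => f1 _ _; have := f1 1 0 0; rewrite !scale1r addr0 => h; apply: (addrI (f 0)); rewrite addr0 -h. Qed.
Lemma fZ c x : f (c *: x) = c *: f x.
Proof. by case: hf => f1 _ _; have := f1 c x 0; rewrite !addr0 f0 addr0. Qed.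
Lemma fD x y : f (x + y) = f x + f y.
Proof. by case: hf => f1 _ _; have := f1 1 x y; rewrite !scale1r. Qed.
Lemma fsum (n : nat) (G : 'I_n -> A) : f (\sum_i G i) = \sum_i f (G i).
Proof. by apply: (big_morph f fD f0). Qed.
Lemma fst_sum (n : nat) (G : 'I_n -> TE B) : (\sum_i G i).1 = \sum_i (G i).1.
Proof. by apply: (big_morph fst) => //. Qed.
Lemma snd_sum (n : nat) (G : 'I_n -> TE B) : (\sum_i G i).2 = \sum_i (G i).2.
Proof. by apply: (big_morph snd) => //. Qed.
Lemma split36 (V : nmodType) (G : 'I_36 -> V) :
  \sum_(j < 36) G j = \sum_(i < 18) G (lshift 18 i) + \sum_(i < 18) G (rshift 18 i).
Proof. exact: (@big_split_ord _ _ _ 18 18 xpredT G). Qed.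

Lemma te_scaleE (k : K) (u : TE B) : k *: u = (k *: u.1, k *: u.2). Proof. by []. Qed.
Lemma mm_neq0 q : mm lam q != 0.
Proof. by ocase q; rewrite /mm /= ?oner_neq0. Qed.

Lemma sum_delta (G : 'I_18 -> K) r : \sum_i G i * (if i == r then mm lam i else 0) = G r * mm lam r.
Proof.
rewrite (bigD1 r) //= eqxx big1 ?addr0 // => i /negbTE ->; by rewrite mulr0.
Qed.

Lemma f_ker z : f z = 0 -> z = 0.
Proof.
have [c ->] := A_span hlam hqA hrA hPA z.
rewrite fsum split36 => h.
have h2 (r : 'I_18) : c (rshift 18 r) = 0.
  have := congr1 (fun u : TE B => u.2 (XB r)) h => /=.
  rewrite !snd_sum add_lfunE !sum_lfunE zero_lfunE.
  rewrite big1 ?add0r; last by move=> i _; rewrite fZ fB te_scaleE /= scaler0 zero_lfunE.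
  under eq_bigr do rewrite fZ te_scaleE /= scale_lfunE fD2 scaleoE.
  rewrite sum_delta => /eqP; rewrite mulf_eq0 (negbTE (mm_neq0 r)) orbF => /eqP //.
have h1 (r : 'I_18) : c (lshift 18 r) = 0.
  have := congr1 (fun u : TE B => (f (PA (rshift 18 r))).2 u.1) h => /=.
  rewrite !fst_sum linearD /= !linear_sum /=.
  rewrite [X in _ + X]big1 ?addr0; last by move=> i _; rewrite fZ te_scaleE /= fD1 scaler0 linear0.
  rewrite linear0.
  under eq_bigr do rewrite fZ fB te_scaleE /= linearZ /= fD2 scaleoE.
  rewrite (bigD1 r) //= eqxx big1 ?addr0.
    by move/eqP; rewrite mulf_eq0 (negbTE (mm_neq0 r)) orbF => /eqP.
  by move=> i /negbTE; rewrite eq_sym => ->; rewrite mulr0.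
by rewrite split36 !big1 ?addr0 // => i _; rewrite ?h1 ?h2 scale0r.
Qed.

Lemma f_surj u : exists x, f x = u.
Proof.
case: u => b phi.
have [d ->] := B_span hqB hrB hPB b.
exists (\sum_i d i *: PA (lshift 18 i) + \sum_i (phi (XB i) / mm lam i) *: PA (rshift 18 i)).
rewrite fD !fsum; apply: (te_ext hqB hrB hPB) => [|q] /=.
  rewrite !fst_sum [X in _ + X]big1 ?addr0; last by move=> i _; rewrite fZ te_scaleE /= fD1 scaler0.
  by apply: eq_bigr => i _; rewrite fZ fB te_scaleE.
rewrite !snd_sum add_lfunE !sum_lfunE big1 ?add0r; last first.
  by move=> i _; rewrite fZ fB te_scaleE /= scaler0 zero_lfunE.
under eq_bigr do rewrite fZ te_scaleE /= scale_lfunE fD2 scaleoE.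
by rewrite sum_delta divfK ?mm_neq0.
Qed.

Lemma f_inj : injective f.
Proof.
move=> x y h; apply/eqP; rewrite -subr_eq0; apply/eqP/f_ker.
by rewrite fD -scaleN1r fZ h scaleN1r subrr.
Qed.

Lemma f_bij : bijective f.
Proof.
pose g u := proj1_sig (constructive_indefinite_description _ (f_surj u)).
have hg u : f (g u) = u by rewrite /g; case: constructive_indefinite_description.
by exists g => [x|u]; [apply: f_inj; rewrite hg | exact: hg].
Qed.
End Main2.

Unset Implicit Arguments. Set Strict Implicit.
Theorem lemma6p2 (K : closedFieldType) (lam : K) (hlam : lam != 0)
    (A : algType K) (eA : 'I_6 -> A) (aA : LArr -> A)
    (B : falgType K) (eB : 'I_6 -> B) (aB : BArr -> B) :
  presented_by L_src L_tgt (L_rel lam) eA aA ->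
  presented_by B_src B_tgt (B_rel lam) eB aB ->
  exists phi : A -> B * 'Hom(B, K^o), iso_triv_ext phi.
Proof.
move=> hPA hPB.
have [hqA hrA UPA] := hPA; have [hqB hrB UPB] := hPB.
have [[rho1 [rh1 r1e r1a]] _] := UPB _ _ _ (sd_qr (c1 lam)) (c1_rel lam).
have [[rho2 [rh2 r2e r2a]] _] := UPB _ _ _ (sd_qr (c2 K)) (c2_rel lam).
have [[f [hf fe fa]] _] := UPA _ _ _ (T_qr lam hqB rh1 rh2 r1e r2e) (T_rel hqB hrB hPB rh1 rh2 r1e r2e r1a r2a).
exists f; split.
- exact: (f_bij hlam hqB hrB hPB rh1 rh2 r1e r2e r1a r2a hqA hrA hPA hf fe fa).
- by case: hf.
- by case: hf.
- by case: hf.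
Qed.
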